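(* Let $\delta'\in(0,1)$ and fix $X\in\mathcal X$. On the event $\mathcal E_{U,m}(\delta')$, for each $i\in[m]$ the map $\theta_i=(U_i,\operatorname{vec}(W_i))\mapsto h(X;\theta_i)$, restricted to $\{U_i:\|U_i-U_i^{(0)}\|_2\le\rho_u/\sqrt m\}\times\{W_i:\|W_i-W_i^{(0)}\|_F\le\rho_w/\sqrt m\}$, is $L_{1,m}(\delta')$-Lipschitz and $L_{2,m}(\delta')$-smooth (its gradient is $L_{2,m}(\delta')$-Lipschitz), where $L_{1,m}(\delta')=\sigma_1\sqrt{1+B_{U,m}(\delta')^2}$ and $L_{2,m}(\delta')=\sigma_2(1+B_{U,m}(\delta')^2)+8\sigma_1\sqrt{1+B_{U,m}(\delta')^2}$, with $B_{U,m}(\delta')=\sqrt d+\sqrt{2\log(m/(2\delta'))}+\rho_u/\sqrt m$.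
   Context: $\mathcal{X}=\{X=(X_1,\dots,X_T)\in\mathbb{R}^{d\times T}:\max_t\|X_t\|_2\le1\}$; each $X$ has a fixed query $q_X\in\mathbb{R}^d$, $\|q_X\|_2\le1$. Softmax $(\sigma_s(z))_t=e^{z_t}/\sum_se^{z_s}$; $a(X;W)=X\sigma_s(X^\top Wq_X)$; $h(X;\theta)=\sigma(U^\top a(X;W))$ for $\theta=(U,\operatorname{vec}(W))$, $U\in\mathbb{R}^d,W\in\mathbb{R}^{d\times d}$. $\sigma:\mathbb{R}\to\mathbb{R}$ twice differentiable with $|\sigma|\le\sigma_0,|\sigma'|\le\sigma_1,|\sigma''|\le\sigma_2$. $m$ even; $\rho_u,\rho_w>0$. Symmetric initialization: for $i\le m/2$, independently, $W_i^{(0)}$ with i.i.d. $\mathcal N(0,1)$ entries, $U_i^{(0)}\sim\mathcal N(0,I_d)$, $c_i^{(0)}$ uniform on $\{\pm1\}$, and $W_{i+m/2}^{(0)}=W_i^{(0)}$, $U_{i+m/2}^{(0)}=U_i^{(0)}$, $c_{i+m/2}^{(0)}=-c_i^{(0)}$. $\mathcal E_{U,m}(\delta')=\{\max_{i\in[m]}\|U_i^{(0)}\|_2\le\sqrt d+\sqrt{2\log(m/(2\delta'))}\}$. Norms on $\theta$ are Euclidean (Frobenius on the $W$ block). *)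

(* Defs.v *)
From HB Require Import structures.
From mathcomp Require Import all_boot all_order all_algebra.
From mathcomp Require Import all_classical all_reals all_analysis.
Set Implicit Arguments. Unset Strict Implicit. Unset Printing Implicit Defensive.
Import Order.TTheory GRing.Theory Num.Theory.
Import numFieldNormedType.Exports.
Local Open Scope ring_scope.

Section Defs.
Variable R : realType.

Definition enormc (n : nat) (v : 'cV[R]_n) : R := Num.sqrt (\sum_i v i 0 ^+ 2).
Definition enormr (n : nat) (v : 'rV[R]_n) : R := Num.sqrt (\sum_i v 0 i ^+ 2).
Definition fnorm (n p : nat) (A : 'M[R]_(n, p)) : R :=
  Num.sqrt (\sum_i \sum_j A i j ^+ 2).

Definition softmax (T : nat) (z : 'cV[R]_T) : 'cV[R]_T :=
  \col_t (expR (z t 0) / \sum_s expR (z s 0)).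

Definition attn (d T : nat) (X : 'M[R]_(d, T)) (q : 'cV[R]_d) (W : 'M[R]_d)
  : 'cV[R]_d := X *m softmax (X^T *m W *m q).

Definition hnet (sigma : R -> R) (d T : nat) (X : 'M[R]_(d, T)) (q : 'cV[R]_d)
  (U : 'cV[R]_d) (W : 'M[R]_d) : R := sigma ((U^T *m attn X q W) 0 0).

(* parameter vector theta = (U, vec W) in R^(d + d*d) *)
Definition thU (d : nat) (th : 'rV[R]_(d + d * d)) : 'cV[R]_d := (lsubmx th)^T.
Definition thW (d : nat) (th : 'rV[R]_(d + d * d)) : 'M[R]_d := vec_mx (rsubmx th).

Definition hth (sigma : R -> R) (d T : nat) (X : 'M[R]_(d, T)) (q : 'cV[R]_d)
  (th : 'rV[R]_(d + d * d)) : R := hnet sigma X q (thU th) (thW th).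

Definition grad (n : nat) (f : 'rV[R]_n -> R) (th : 'rV[R]_n) : 'rV[R]_n :=
  \row_k ('D_(delta_mx 0 k) f th).

Definition B_Um (d m : nat) (dl rho_u : R) : R :=
  Num.sqrt d%:R + Num.sqrt (2 * ln (m%:R / (2 * dl))) + rho_u / Num.sqrt m%:R.
Definition L1m (s1 : R) (d m : nat) (dl rho_u : R) : R :=
  s1 * Num.sqrt (1 + B_Um d m dl rho_u ^+ 2).
Definition L2m (s1 s2 : R) (d m : nat) (dl rho_u : R) : R :=
  s2 * (1 + B_Um d m dl rho_u ^+ 2) + 8 * s1 * Num.sqrt (1 + B_Um d m dl rho_u ^+ 2).

End Defs.

(* Main.v *)
Require Import Defs.
From HB Require Import structures.
From mathcomp Require Import all_boot all_order all_algebra.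
From mathcomp Require Import all_classical all_reals all_analysis.
From mathcomp Require Import ring lra.
Import Order.TTheory GRing.Theory Num.Theory.
Import numFieldNormedType.Exports.
Set Implicit Arguments. Unset Strict Implicit. Unset Printing Implicit Defensive.
Local Open Scope classical_set_scope.
Local Open Scope ring_scope.

Section Norms.
Variable R : realType.

Definition nrm n (F : 'I_n -> R) : R := Num.sqrt (\sum_i F i ^+ 2).

Lemma sumsq_ge0 n (F : 'I_n -> R) : 0 <= \sum_i F i ^+ 2.
Proof. by apply: sumr_ge0 => i _; exact: sqr_ge0. Qed.

Lemma nrm_ge0 n (F : 'I_n -> R) : 0 <= nrm F.
Proof. exact: sqrtr_ge0. Qed.

Lemma nrm_sq n (F : 'I_n -> R) : nrm F ^+ 2 = \sum_i F i ^+ 2.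
Proof. by rewrite sqr_sqrtr // sumsq_ge0. Qed.

Lemma sum_sq_lin n (F G : 'I_n -> R) (c b : R) :
  \sum_i (c * F i - b * G i) ^+ 2 =
  c ^+ 2 * (\sum_i F i ^+ 2) - 2 * c * b * (\sum_i F i * G i) + b ^+ 2 * (\sum_i G i ^+ 2).
Proof.
rewrite !mulr_sumr -sumrB -big_split /=; apply: eq_bigr => i _; ring.
Qed.

Lemma CS_sq n (F G : 'I_n -> R) :
  (\sum_i F i * G i) ^+ 2 <= (\sum_i F i ^+ 2) * (\sum_i G i ^+ 2).
Proof.
set A := \sum_i F i ^+ 2; set C := \sum_i G i ^+ 2; set Bx := \sum_i F i * G i.
have C0 : 0 <= C by exact: sumsq_ge0.
have := sum_sq_lin F G C Bx; rewrite -/A -/C -/Bx => E.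
have : 0 <= \sum_i (C * F i - Bx * G i) ^+ 2 by exact: sumsq_ge0.
rewrite E => H.
have [Cp|] := ltrP 0 C.
  have : 0 <= C * (C * A - Bx ^+ 2) by lra.
  by rewrite pmulr_rge0 // subr_ge0 mulrC.
move=> Cle; have Ceq : C = 0 by apply/eqP; rewrite eq_le Cle C0.
have G0 : forall i, G i = 0.
  move=> i; have := @psumr_eq0P _ _ predT (fun j => G j ^+ 2) (fun j _ => sqr_ge0 (G j)) Ceq i isT.
  by move/eqP; rewrite sqrf_eq0 => /eqP.
have -> : Bx = 0 by rewrite /Bx big1 // => i _; rewrite G0 mulr0.
by rewrite Ceq expr0n /= mulr0.
Qed.

Lemma CS n (F G : 'I_n -> R) : `|\sum_i F i * G i| <= nrm F * nrm G.
Proof.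
rewrite /nrm -sqrtrM ?sumsq_ge0 // -sqrtr_sqr.
by apply: ler_wsqrtr; exact: CS_sq.
Qed.

Lemma nrm_triangle n (F G : 'I_n -> R) :
  nrm (fun i => F i + G i) <= nrm F + nrm G.
Proof.
have h0 := nrm_ge0 F; have h1 := nrm_ge0 G.
rewrite -[X in _ <= X]ger0_norm ?addr_ge0 // -sqrtr_sqr {1}/nrm.
apply: ler_wsqrtr.
have -> : \sum_i (F i + G i) ^+ 2 =
   \sum_i F i ^+ 2 + 2 * (\sum_i F i * G i) + \sum_i G i ^+ 2.
  rewrite mulr_sumr -!big_split /=; apply: eq_bigr => i _; ring.
rewrite -(nrm_sq F) -(nrm_sq G).
have HC := CS F G.
have HB := ler_norm (\sum_i F i * G i).
move: HC HB; set a := nrm F; set c := nrm G; set b := \sum_i _ => HC HB.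
nra.
Qed.

Lemma nrm_scale n (a : R) (F : 'I_n -> R) : nrm (fun i => a * F i) = `|a| * nrm F.
Proof.
rewrite /nrm -sqrtr_sqr -sqrtrM ?sqr_ge0 // mulr_sumr.
by congr Num.sqrt; apply: eq_bigr => i _; rewrite exprMn.
Qed.

End Norms.


Section Weighted.
Variable R : realType.
Variable T : nat.
Variable p : 'I_T -> R.
Hypothesis hp : forall t, 0 <= p t.
Hypothesis hs : \sum_t p t <= 1.

Definition wm (y : 'I_T -> R) := \sum_t p t * y t.

Lemma wm_bound (K : R) (y : 'I_T -> R) : 0 <= K -> (forall t, `|y t| <= K) -> `|wm y| <= K.
Proof.
move=> K0 hy; apply: le_trans (ler_norm_sum _ _ _) _.
apply: le_trans (_ : \sum_t p t * K <= K).
  apply: ler_sum => t _; rewrite normrM ger0_norm //.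
  by apply: ler_wpM2l.
by rewrite -mulr_suml; rewrite -[X in _ <= X]mul1r; apply: ler_wpM2r.
Qed.

Lemma wm_sum_le (K : R) (y : 'I_T -> R) : (forall t, y t <= K) -> 0 <= K -> wm y <= K.
Proof.
move=> hy K0; apply: le_trans (_ : \sum_t p t * K <= K).
  by apply: ler_sum => t _; apply: ler_wpM2l.
by rewrite -mulr_suml; rewrite -[X in _ <= X]mul1r; apply: ler_wpM2r.
Qed.

Lemma cov_eq (y w : 'I_T -> R) : wm (fun t => w t * y t) - wm y * wm w =
  wm (fun t => (y t - wm y) * w t).
Proof.
rewrite /wm mulr_sumr -sumrB; apply: eq_bigr => t _; ring.
Qed.

Lemma cov_bound (K1 K2 : R) (y w : 'I_T -> R) : 0 <= K1 -> 0 <= K2 ->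
  (forall t, `|y t| <= K1) -> (forall t, `|w t| <= K2) ->
  `|wm (fun t => w t * y t) - wm y * wm w| <= 2 * K1 * K2.
Proof.
move=> K10 K20 hy hw; rewrite cov_eq.
have hm := wm_bound K10 hy.
apply: wm_bound; first by rewrite !mulr_ge0.
move=> t; rewrite normrM; apply: ler_pM => //.
apply: le_trans (ler_normB _ _) _; have := hy t; lra.
Qed.

Lemma cov_refined (B K : R) (y w : 'I_T -> R) : 0 < B -> 0 <= K ->
  (forall t, `|y t| <= B) -> (forall t, `|w t| <= K) ->
  `|wm (fun t => w t * y t) - wm y * wm w| <= B * K.
Proof.
move=> B0 K0 hy hw; rewrite cov_eq.
set m := wm y.
have E1 : wm (fun t => (y t - m) ^+ 2) = wm (fun t => y t ^+ 2) - m ^+ 2 * (2 - \sum_t p t).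
  have E0 : forall c : R, \sum_t p t * (y t - c) ^+ 2 = \sum_t p t * y t ^+ 2
      - 2 * c * (\sum_t p t * y t) + c ^+ 2 * \sum_t p t.
    by move=> c; rewrite !mulr_sumr -sumrB -big_split /=; apply: eq_bigr => t _; ring.
  rewrite /wm E0 -/(wm y) -/m; ring.
have E2 : wm (fun t => y t ^+ 2) <= B ^+ 2.
  apply: wm_sum_le; last exact: sqr_ge0.
  move=> t; have h := hy t; rewrite -[y t ^+ 2]real_normK ?num_real //.
  have := normr_ge0 (y t); nra.
have E3 : wm (fun t => (y t - m) ^+ 2) <= B ^+ 2.
  rewrite E1; have : 0 <= m ^+ 2 * (2 - \sum_t p t).
    apply: mulr_ge0; [exact: sqr_ge0 | rewrite subr_ge0; apply: le_trans hs _; by rewrite ler1n].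
  move: E2; set s1 := wm _; set s2 := m ^+ 2 * _; lra.
have E4 : wm (fun t => `|y t - m|) <= B.
  have h : forall t, `|y t - m| <= ((y t - m) ^+ 2 / B + B) / 2.
    move=> t; set z := y t - m.
    have hz : `|z| ^+ 2 = z ^+ 2 by rewrite real_normK ?num_real.
    rewrite -subr_ge0 -hz.
    rewrite (_ : _ - _ = (`|z| - B) ^+ 2 / (2 * B)); last by field; rewrite gt_eqF.
    by apply: divr_ge0; [exact: sqr_ge0 | rewrite mulr_ge0 // ltW].
  apply: le_trans (_ : wm (fun t => ((y t - m) ^+ 2 / B + B) / 2) <= B).
    by apply: ler_sum => t _; apply: ler_wpM2l.
  have -> : wm (fun t => ((y t - m) ^+ 2 / B + B) / 2) =
            (wm (fun t => (y t - m) ^+ 2) / B + B * \sum_t p t) / 2.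
    rewrite /wm mulr_sumr !mulr_suml -big_split /= mulr_suml.
    by apply: eq_bigr => t _; field; rewrite gt_eqF.
  have h5 : wm (fun t => (y t - m) ^+ 2) / B <= B.
    by rewrite ler_pdivrMr // -expr2.
  have : B * \sum_t p t <= B by rewrite -[X in _ <= X]mulr1; apply: ler_wpM2l => //; exact: ltW.
  lra.
apply: le_trans (ler_norm_sum _ _ _) _.
apply: le_trans (_ : \sum_t p t * `|y t - m| * K <= B * K).
  apply: ler_sum => t _; rewrite !normrM (ger0_norm (hp t)) -mulrA.
  by apply: ler_wpM2l => //; apply: ler_wpM2l.
by rewrite -mulr_suml; apply: ler_wpM2r.
Qed.

End Weighted.


Section Model.
Variable R : realType.
Variables d T : nat.
Variable X : 'M[R]_(d, T).
Variable q : 'cV[R]_d.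
Local Notation V := 'rV[R]_(d + d * d).

Definition aT (th : V) (t : 'I_T) : R := (X^T *m thU th) t 0.
Definition zT (th : V) (t : 'I_T) : R := (X^T *m thW th *m q) t 0.
Definition Ew (th : V) t := expR (zT th t).
Definition Dn (th : V) := \sum_t Ew th t.
Definition pw (th : V) t := Ew th t / Dn th.
Definition M (th : V) (y : 'I_T -> R) := wm (pw th) y.
Definition g (th : V) := M th (aT th).

Lemma hth_g (sigma : R -> R) th : hth sigma X q th = sigma (g th).
Proof.
rewrite /hth /hnet /attn; congr sigma.
rewrite mulmxA /g /M /wm /pw /Ew /Dn mxE; apply: eq_bigr => t _.
rewrite !mxE /aT mxE mulrC; congr (_ * _); first by rewrite /Ew /zT mxE.
apply: eq_bigr => i _.
by rewrite !mxE mulrC.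
Qed.

Lemma thU_lin (a : R) (u v : V) : thU (a *: u + v) = a *: thU u + thU v.
Proof. by apply/matrixP => i j; rewrite !mxE. Qed.

Lemma thW_lin (a : R) (u v : V) : thW (a *: u + v) = a *: thW u + thW v.
Proof. by apply/matrixP => i j; rewrite !mxE. Qed.

Lemma aT_lin (a : R) (u v : V) t : aT (a *: u + v) t = a * aT u t + aT v t.
Proof. by rewrite /aT thU_lin mulmxDr -scalemxAr !mxE. Qed.

Lemma zT_lin (a : R) (u v : V) t : zT (a *: u + v) t = a * zT u t + zT v t.
Proof. by rewrite /zT thW_lin mulmxDr mulmxDl -scalemxAr -scalemxAl !mxE. Qed.

Lemma enormc_nrm n (v : 'cV[R]_n) : enormc v = nrm (fun i => v i 0).
Proof. by []. Qed.

Lemma aT_bound th t : enormc (col t X) <= 1 -> `|aT th t| <= enormc (thU th).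
Proof.
move=> hX; rewrite /aT mxE.
have -> : \sum_j X^T t j * thU th j 0 = \sum_j X j t * thU th j 0.
  by apply: eq_bigr => j _; rewrite mxE.
apply: le_trans (CS _ _) _.
have -> : nrm (fun j => X j t) = enormc (col t X).
  by rewrite /enormc /nrm; congr Num.sqrt; apply: eq_bigr => j _; rewrite mxE.
rewrite -enormc_nrm -[X in _ <= X]mul1r; apply: ler_wpM2r => //.
exact: nrm_ge0.
Qed.

Lemma Wq_bound (W : 'M[R]_d) : nrm (fun i => (W *m q) i 0) <= fnorm W * enormc q.
Proof.
rewrite /fnorm enormc_nrm /nrm -sqrtrM; last by apply: sumr_ge0 => i _; exact: sumsq_ge0.
apply: ler_wsqrtr; rewrite mulr_suml; apply: ler_sum => i _.
rewrite mxE; exact: CS_sq.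
Qed.

Lemma zT_bound th t : enormc (col t X) <= 1 -> enormc q <= 1 ->
  `|zT th t| <= fnorm (thW th).
Proof.
move=> hX hq; rewrite /zT -mulmxA mxE.
have -> : \sum_j X^T t j * (thW th *m q) j 0 = \sum_j X j t * (thW th *m q) j 0.
  by apply: eq_bigr => j _; rewrite mxE.
apply: le_trans (CS _ _) _.
have -> : nrm (fun j => X j t) = enormc (col t X).
  by rewrite /enormc /nrm; congr Num.sqrt; apply: eq_bigr => j _; rewrite mxE.
have hf : 0 <= fnorm (thW th) by exact: sqrtr_ge0.
apply: le_trans (_ : 1 * (fnorm (thW th) * 1) <= _); last by rewrite mulr1 mul1r.
apply: ler_pM => //; first exact: sqrtr_ge0.
  exact: nrm_ge0.
apply: le_trans (Wq_bound _) _.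
by apply: ler_wpM2l.
Qed.

Lemma norm_split (v : V) :
  enormr v ^+ 2 = enormc (thU v) ^+ 2 + fnorm (thW v) ^+ 2.
Proof.
rewrite /enormr /enormc /fnorm.
rewrite sqr_sqrtr; last exact: sumsq_ge0.
rewrite sqr_sqrtr; last exact: sumsq_ge0.
rewrite sqr_sqrtr; last by apply: sumr_ge0 => i _; exact: sumsq_ge0.
rewrite big_split_ord /=; congr (_ + _).
  by apply: eq_bigr => i _; rewrite !mxE.
rewrite pair_big /=.
rewrite (reindex (uncurry (@mxvec_index d d))) /=; last first.
  exact: curry_mxvec_bij.
apply: eq_bigr => [[i j]] _ /=; rewrite !mxE.
done.
Qed.

End Model.


Section Deriv.
Variable R : realType.
Variable n : nat.
Local Notation V := 'rV[R]_n.

Lemma is_derive_lin (F : V -> R) x v :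
  (forall (a : R) u w, F (a *: u + w) = a * F u + F w) -> is_derive x v F (F v).
Proof.
move=> hF.
have hq : (fun h : R => h^-1 *: ((F \o shift x) (h *: v) - F x)) @ 0^' --> F v.
  apply: cvg_near_cst; near=> h.
  rewrite /= hF addrK [_ *: _]mulrA mulVf ?mul1r //.
  near: h; exact: nbhs_dnbhs_neq.
by split; [exact: cvgP hq | exact: cvg_lim hq].
Unshelve. all: by end_near. Qed.

Lemma derive_line1 (F : V -> R) x v :
  'D_v F x = 'D_1 (fun h : R => F (h *: v + x)) 0.
Proof.
rewrite /derive; set g1 := fun h => h^-1 *: _; set g2 := fun h => h^-1 *: _.
suff -> : g1 = g2 by [].
by rewrite funeqE /g1 /g2 => h /=; rewrite addr0 scale0r add0r [_%:A]mulr1.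
Qed.

Lemma is_derive_comp1 (F : V -> R) (s : R -> R) x v dF :
  is_derive x v F dF -> derivable s (F x) 1 ->
  is_derive x v (fun y => s (F y)) (derive1 s (F x) * dF).
Proof.
move=> [dFx <-] ds.
pose phi := fun h : R => F (h *: v + x).
have dphi : derivable phi 0 1 := (derivable1P F x v).1 dFx.
have phi0 : phi 0 = F x by rewrite /phi scale0r add0r.
have dsphi : derivable s (phi 0) 1 by rewrite phi0.
have dcomp : derivable (s \o phi) 0 1.
  apply/derivable1_diffP; apply: differentiable_comp; exact/derivable1_diffP.
split.
  by apply/derivable1P.
rewrite derive_line1 -derive1E.
rewrite (_ : (fun h : R => s (F (h *: v + x))) = s \o phi) //.
rewrite derive1_comp // phi0 derive1E derive_line1; by rewrite derive1E.
Qed.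

Lemma is_derive_line (F : V -> R) x v t df :
  is_derive (x + t *: v) v F df -> is_derive t 1 (fun s => F (x + s *: v)) df.
Proof.
have E : (fun h : R => h^-1 *: (((fun s => F (x + s *: v)) \o shift t) (h *: 1)
           - F (x + t *: v))) =
         (fun h : R => h^-1 *: ((F \o shift (x + t *: v)) (h *: v) - F (x + t *: v))).
  apply/funext => h /=; congr (_ *: (_ - _)); congr F.
  by rewrite [h *: 1]mulr1 scalerDl addrCA addrC.
move=> [dd dv]; split.
  by rewrite /derivable E.
by rewrite /derive E.
Qed.

End Deriv.


Section MDeriv.
Variable R : realType.
Variables d T : nat.
Variable X : 'M[R]_(d, T).
Variable q : 'cV[R]_d.
Local Notation V := 'rV[R]_(d + d * d).
Local Notation aT := (aT X).
Local Notation zT := (zT X q).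
Local Notation Ew := (Ew X q).
Local Notation Dn := (Dn X q).
Local Notation M := (M X q).

Lemma Ew_gt0 th t : 0 < Ew th t.
Proof. exact: expR_gt0. Qed.

Lemma Dn_ge0 th : 0 <= Dn th.
Proof. by apply: sumr_ge0 => t _; exact: ltW (Ew_gt0 _ _). Qed.

Lemma Dn_gt0 th (t0 : 'I_T) : 0 < Dn th.
Proof.
rewrite /Dn (bigD1 t0) //=.
have h1 := Ew_gt0 th t0.
have h2 : 0 <= \sum_(i | i != t0) Ew th i.
  by apply: sumr_ge0 => t _; exact: ltW (Ew_gt0 _ _).
lra.
Qed.

Lemma pw_ge0 th t : 0 <= pw X q th t.
Proof. by rewrite /pw divr_ge0 // ?Dn_ge0 // ltW // Ew_gt0. Qed.

Lemma pw_sum th : \sum_t pw X q th t <= 1.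
Proof.
rewrite /pw -mulr_suml -/(Dn th).
have [->|h] := eqVneq (Dn th) 0; first by rewrite mul0r.
by rewrite mulfV.
Qed.

Lemma M_E th y : M th y = (\sum_t Ew th t * y t) / Dn th.
Proof.
rewrite /M /wm /pw mulr_suml; apply: eq_bigr => t _; rewrite /Ew; ring.
Qed.

Lemma is_derive_Ew x v t : is_derive x v (fun th => Ew th t) (Ew x t * zT v t).
Proof.
have hz : is_derive x v (fun th => zT th t) (zT v t).
  by apply: is_derive_lin => a u w; exact: zT_lin.
have := is_derive_comp1 hz (@derivable_expR R (zT x t)).
rewrite derive1E (@derive_val _ _ _ _ _ _ _ (is_derive_expR (zT x t))) => h.
by apply: is_derive_eq h _.
Qed.

Lemma is_derive_Dn x v : is_derive x v Dn (\sum_t Ew x t * zT v t).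
Proof.
have := @is_derive_sum _ _ _ _ (fun t th => Ew th t) x v (fun t => Ew x t * zT v t)
  (fun t => is_derive_Ew x v t).
by rewrite fct_sumE.
Qed.

Lemma is_derive_M x v (y : V -> 'I_T -> R) (dy : 'I_T -> R) :
  (forall t, is_derive x v (fun th => y th t) (dy t)) ->
  is_derive x v (fun th => M th (y th))
    (M x dy + M x (fun t => zT v t * y x t) - M x (y x) * M x (zT v)).
Proof.
move=> hy.
have [T0|Tpos] := eqVneq T 0%N.
  have emp : forall t : 'I_T, False.
    by move=> t; have := ltn_ord t; rewrite {2}T0.
  have M0 : forall th w, M th w = 0.
    by move=> th w; rewrite /M /wm big1 // => t _; case: (emp t).
  rewrite (_ : (fun th => M th (y th)) = cst 0); last by apply/funext => th; rewrite M0.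
  rewrite !M0 mulr0 subr0 addr0.
  exact: is_derive_cst.
have Tp : (0 < T)%N by rewrite lt0n.
pose t0 : 'I_T := Ordinal Tp.
have hD : forall th, Dn th != 0 by move=> th; rewrite gt_eqF // (Dn_gt0 th t0).
have hN : is_derive x v (fun th => \sum_t Ew th t * y th t)
   (\sum_t (Ew x t *: dy t + y x t *: (Ew x t * zT v t))).
  have := @is_derive_sum _ _ _ _ (fun t th => Ew th t * y th t) x v
     (fun t => Ew x t *: dy t + y x t *: (Ew x t * zT v t))
     (fun t => is_deriveM (is_derive_Ew x v t) (hy t)).
  by rewrite fct_sumE.
have hI : is_derive x v (fun th => (Dn th)^-1) (- (Dn x) ^- 2 *: \sum_t Ew x t * zT v t).
  have hd := is_derive_Dn x v.
  split; first by apply: (derivableV (f := Dn)); [exact: hD | case: hd].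
  rewrite (deriveV (hD x)); last by case: hd.
  by case: hd => _ ->.
have := is_deriveM hN hI.
rewrite (_ : ((fun th => \sum_t Ew th t * y th t) * (fun th => (Dn th)^-1)) =
             (fun th => M th (y th))); last first.
  by apply/funext => th; rewrite M_E.
move=> h; apply: is_derive_eq h _.
rewrite !M_E /=.
have -> : \sum_t (Ew x t *: dy t + y x t *: (Ew x t * zT v t)) =
   \sum_t Ew x t * dy t + \sum_t Ew x t * (zT v t * y x t).
  by rewrite -big_split /=; apply: eq_bigr => t _; rewrite /GRing.scale /=; ring.
rewrite /GRing.scale /=.
field; exact: hD.
Qed.

End MDeriv.


Section GDeriv.
Variable R : realType.
Variables d T : nat.
Variable X : 'M[R]_(d, T).
Variable q : 'cV[R]_d.
Local Notation V := 'rV[R]_(d + d * d).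
Local Notation aT := (aT X).
Local Notation zT := (zT X q).
Local Notation M := (M X q).
Local Notation g := (g X q).

Definition Gv (th v : V) := M th (aT v) + M th (fun t => zT v t * aT th t)
  - M th (aT th) * M th (zT v).

Definition Hs (x v w : V) :=
   (M x (fun _ => 0) + M x (fun t => zT v t * aT w t) - M x (aT w) * M x (zT v))
 + (M x (fun t => zT w t * aT v t) + M x (fun t => zT v t * (zT w t * aT x t))
     - M x (fun t => zT w t * aT x t) * M x (zT v))
 - (M x (aT x) * (M x (fun _ => 0) + M x (fun t => zT v t * zT w t) - M x (zT w) * M x (zT v))
    + M x (zT w) * Gv x v).

Lemma is_derive_aT x v t : is_derive x v (fun th => aT th t) (aT v t).
Proof. by apply: is_derive_lin => a u w; exact: aT_lin. Qed.

Lemma is_derive_g x v : is_derive x v g (Gv x v).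
Proof. exact: (is_derive_M X q (y := aT) (fun t => is_derive_aT x v t)). Qed.

Lemma is_derive_f (sigma : R -> R) x v : (forall y, derivable sigma y 1) ->
  is_derive x v (fun th => sigma (g th)) (derive1 sigma (g x) * Gv x v).
Proof. by move=> hs; apply: is_derive_comp1 (is_derive_g x v) (hs _). Qed.

Lemma is_derive_Gv x v w : is_derive x v (fun th => Gv th w) (Hs x v w).
Proof.
have hA : is_derive x v (fun th => M th (aT w))
   (M x (fun _ => 0) + M x (fun t => zT v t * aT w t) - M x (aT w) * M x (zT v)).
  by apply: (is_derive_M X q (y := fun _ => aT w)) => t; exact: is_derive_cst.
have hB : is_derive x v (fun th => M th (fun t => zT w t * aT th t))
   (M x (fun t => zT w t * aT v t) + M x (fun t => zT v t * (zT w t * aT x t))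
     - M x (fun t => zT w t * aT x t) * M x (zT v)).
  apply: (is_derive_M X q (y := fun th t => zT w t * aT th t)) => t.
  by apply: is_derive_lin => a u w'; rewrite aT_lin; ring.
have hZ : is_derive x v (fun th => M th (zT w))
   (M x (fun _ => 0) + M x (fun t => zT v t * zT w t) - M x (zT w) * M x (zT v)).
  by apply: (is_derive_M X q (y := fun _ => zT w)) => t; exact: is_derive_cst.
have hC := is_deriveM (is_derive_g x v) hZ.
have := is_deriveB (is_deriveD hA hB) hC.
rewrite (_ : ((fun th => M th (aT w)) + (fun th => M th (fun t => zT w t * aT th t))
   - (g * (fun th => M th (zT w)))) = (fun th => Gv th w)); last first.
  by apply/funext => th.
move=> h; apply: is_derive_eq h _.
by rewrite /Hs /GRing.scale /= [M x (zT w) * _]mulrC.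
Qed.

Hypothesis hX : forall t : 'I_T, enormc (col t X) <= 1.
Hypothesis hq : enormc q <= 1.

Lemma M0 x : M x (fun _ => 0) = 0.
Proof. by rewrite /M /wm big1 // => t _; rewrite mulr0. Qed.

Lemma M_bound x K y : 0 <= K -> (forall t, `|y t| <= K) -> `|M x y| <= K.
Proof. exact: (wm_bound (pw_ge0 X q x) (pw_sum X q x)). Qed.

Lemma cov_boundM x K1 K2 y w : 0 <= K1 -> 0 <= K2 ->
  (forall t, `|y t| <= K1) -> (forall t, `|w t| <= K2) ->
  `|M x (fun t => w t * y t) - M x y * M x w| <= 2 * K1 * K2.
Proof. exact: (cov_bound (pw_ge0 X q x) (pw_sum X q x)). Qed.

Lemma cov_refM x B K y w : 0 < B -> 0 <= K ->
  (forall t, `|y t| <= B) -> (forall t, `|w t| <= K) ->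
  `|M x (fun t => w t * y t) - M x y * M x w| <= B * K.
Proof. exact: (cov_refined (pw_ge0 X q x) (pw_sum X q x)). Qed.

Definition gam (v : V) := enormc (thU v).
Definition del (v : V) := fnorm (thW v).

Lemma gam_ge0 v : 0 <= gam v. Proof. exact: sqrtr_ge0. Qed.
Lemma del_ge0 v : 0 <= del v. Proof. exact: sqrtr_ge0. Qed.

Lemma aT_b v t : `|aT v t| <= gam v. Proof. exact: aT_bound. Qed.
Lemma zT_b v t : `|zT v t| <= del v. Proof. exact: zT_bound. Qed.

Variable Bb : R.
Hypothesis Bb0 : 0 < Bb.

Lemma Gv_bound x v : (forall t, `|aT x t| <= Bb) ->
  `|Gv x v| <= gam v + Bb * del v.
Proof.
move=> ha; rewrite /Gv -addrA.
apply: le_trans (ler_normD _ _) _; apply: lerD.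
  by apply: M_bound; [exact: gam_ge0 | exact: aT_b].
by apply: cov_refM => //; [exact: del_ge0 | exact: zT_b].
Qed.

Lemma combo (c1 m1 c2a c2b ma c3 mz G A1 A2 A3 A4 A5 A6 A7 : R) :
  0 <= A4 -> 0 <= A6 -> `|c1| <= A1 -> `|m1| <= A2 -> `|c2a - c2b| <= A3 ->
  `|ma| <= A4 -> `|c3| <= A5 -> `|mz| <= A6 -> `|G| <= A7 ->
  `|c1 + (m1 + c2a - c2b) - (ma * c3 + mz * G)| <= A1 + A2 + A3 + A4 * A5 + A6 * A7.
Proof.
move=> A40 A60 h1 h2 h3 h4 h5 h6 h7.
rewrite (_ : _ + _ - _ = c1 + m1 + (c2a - c2b) - ma * c3 - mz * G); last by ring.
have hm : `|ma * c3| <= A4 * A5 by rewrite normrM; apply: ler_pM.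
have hg : `|mz * G| <= A6 * A7 by rewrite normrM; apply: ler_pM.
have := ler_normB (c1 + m1 + (c2a - c2b) - ma * c3) (mz * G).
have := ler_normB (c1 + m1 + (c2a - c2b)) (ma * c3).
have := ler_normD (c1 + m1) (c2a - c2b).
have := ler_normD c1 m1.
lra.
Qed.

Lemma Hs_bound x v w : (forall t, `|aT x t| <= Bb) ->
  `|Hs x v w| <= 2 * gam w * del v + 2 * gam v * del w + 5 * Bb * del v * del w.
Proof.
move=> ha.
have gv := gam_ge0 v; have gw := gam_ge0 w; have dv := del_ge0 v; have dw := del_ge0 w.
have B0 := ltW Bb0.
rewrite /Hs !M0 !add0r.
have h1 : `|M x (fun t => zT v t * aT w t) - M x (aT w) * M x (zT v)| <= 2 * gam w * del v.
  by apply: cov_boundM => //; [exact: aT_b | exact: zT_b].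
have h2 : `|M x (fun t => zT w t * aT v t)| <= del w * gam v.
  apply: M_bound => [|t]; first exact: mulr_ge0.
  by rewrite normrM; apply: ler_pM => //; [exact: zT_b | exact: aT_b].
have h3 : `|M x (fun t => zT v t * (zT w t * aT x t)) - M x (fun t => zT w t * aT x t) * M x (zT v)|
    <= 2 * (del w * Bb) * del v.
  apply: cov_boundM => [||t|t]; first exact: mulr_ge0.
  - exact: dv.
  - by rewrite normrM; apply: ler_pM => //; exact: zT_b.
  - exact: zT_b.
have h4 : `|M x (aT x)| <= Bb by apply: M_bound.
have h5 : `|M x (fun t => zT v t * zT w t) - M x (zT w) * M x (zT v)| <= 2 * del w * del v.
  by apply: cov_boundM => //; exact: zT_b.
have h6 : `|M x (zT w)| <= del w by apply: M_bound => //; exact: zT_b.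
have h7 := Gv_bound v ha.
apply: le_trans (combo B0 dw h1 h2 h3 h4 h5 h6 h7) _.
rewrite le_eqVlt; apply/orP; left; apply/eqP; ring.
Qed.

End GDeriv.


Section Real.
Variable R : realType.

Lemma RL1 (ga de B : R) : 0 <= ga -> 0 <= de -> 0 <= B ->
  ga + B * de <= Num.sqrt (1 + B ^+ 2) * Num.sqrt (ga ^+ 2 + de ^+ 2).
Proof.
move=> h1 h2 h3.
rewrite -sqrtrM; last by rewrite addr_ge0 // sqr_ge0.
rewrite -[X in X <= _]ger0_norm ?addr_ge0 ?mulr_ge0 // -sqrtr_sqr.
apply: ler_wsqrtr.
have : 0 <= (B * ga - de) ^+ 2 by exact: sqr_ge0.
nra.
Qed.

Lemma CS2 (a b c e : R) : 0 <= a -> 0 <= b -> 0 <= c -> 0 <= e ->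
  a * e + b * c <= Num.sqrt (a ^+ 2 + b ^+ 2) * Num.sqrt (c ^+ 2 + e ^+ 2).
Proof.
move=> h1 h2 h3 h4.
rewrite -sqrtrM; last by rewrite addr_ge0 // sqr_ge0.
rewrite -[X in X <= _]ger0_norm ?addr_ge0 ?mulr_ge0 // -sqrtr_sqr.
apply: ler_wsqrtr.
have : 0 <= (a * c - b * e) ^+ 2 by exact: sqr_ge0.
nra.
Qed.

Lemma sqrt_ge_l (a b : R) : 0 <= a -> 0 <= b -> a <= Num.sqrt (a ^+ 2 + b ^+ 2).
Proof.
move=> h1 h2; rewrite -[X in X <= _]ger0_norm // -sqrtr_sqr.
by apply: ler_wsqrtr; rewrite lerDl sqr_ge0.
Qed.

Lemma sqrt_ge_r (a b : R) : 0 <= a -> 0 <= b -> b <= Num.sqrt (a ^+ 2 + b ^+ 2).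
Proof. by move=> h1 h2; rewrite addrC; exact: sqrt_ge_l. Qed.

Lemma RL2 (gv dv gw dw B : R) : 0 <= gv -> 0 <= dv -> 0 <= gw -> 0 <= dw -> 0 <= B ->
  2 * gw * dv + 2 * gv * dw + 5 * B * dv * dw <=
  8 * Num.sqrt (1 + B ^+ 2) * (Num.sqrt (gv ^+ 2 + dv ^+ 2) * Num.sqrt (gw ^+ 2 + dw ^+ 2)).
Proof.
move=> h1 h2 h3 h4 h5.
set S := Num.sqrt (1 + B ^+ 2).
set Nv := Num.sqrt (gv ^+ 2 + dv ^+ 2); set Nw := Num.sqrt (gw ^+ 2 + dw ^+ 2).
have c1 := CS2 h1 h2 h3 h4.
have e1 : gv * dw + dv * gw <= Nv * Nw.
  exact: c1.
have hS1 : 1 <= S by rewrite -[1 in X in X <= _]sqrtr1; apply: ler_wsqrtr; rewrite lerDl sqr_ge0.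
have hSB : B <= S by rewrite /S -[X in X <= _]ger0_norm // -sqrtr_sqr; apply: ler_wsqrtr; rewrite lerDr ler01.
have hdv : dv <= Nv by exact: sqrt_ge_r.
have hdw : dw <= Nw by exact: sqrt_ge_r.
have hN : 0 <= Nv * Nw by rewrite mulr_ge0 // sqrtr_ge0.
have hdd : dv * dw <= Nv * Nw by apply: ler_pM.
have hb : B * (dv * dw) <= S * (Nv * Nw) by apply: ler_pM => //; rewrite mulr_ge0.
nra.
Qed.

End Real.

Section Final.
Variable R : realType.
Variables d T : nat.
Variable X : 'M[R]_(d, T).
Variable q : 'cV[R]_d.
Local Notation V := 'rV[R]_(d + d * d).
Local Notation aT := (aT X).
Local Notation zT := (zT X q).
Local Notation M := (M X q).
Local Notation g := (g X q).
Local Notation Gv := (Gv X q).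
Local Notation Ew := (Ew X q).
Local Notation Dn := (Dn X q).

Definition linF (F : V -> R) := forall (a : R) u w, F (a *: u + w) = a * F u + F w.

Lemma lin_sum (F : V -> R) : linF F -> forall th, F th = \sum_k th 0 k * F (delta_mx 0 k).
Proof.
move=> hF th.
have F0 : F 0 = 0.
  have h := hF 1 0 0; rewrite scaler0 addr0 mul1r in h; lra.
have FD : forall a b, F (a + b) = F a + F b by move=> a b; rewrite -[a]scale1r hF mul1r scale1r.
have FZ : forall c u, F (c *: u) = c * F u by move=> c u; rewrite -[c *: u]addr0 hF F0 addr0.
rewrite {1}(row_sum_delta th).
elim/big_rec2: _ => [|k y1 y2 _ IH]; first by rewrite F0.
by rewrite FD FZ IH.
Qed.

Lemma lin_diff (F : V -> R) : linF F -> forall th, differentiable F th.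
Proof.
move=> hF th.
rewrite (_ : F = \sum_k (fun th : V => th 0 k * F (delta_mx 0 k))); last first.
  by rewrite fct_sumE; apply/funext => x; exact: lin_sum.
apply: differentiable_sum => k.
rewrite (_ : (fun th : V => th 0 k * F (delta_mx 0 k)) =
             (fun th : V => th 0 k) * cst (F (delta_mx 0 k))); last by apply/funext.
apply: differentiableM; [exact: differentiable_coord | exact: differentiable_cst].
Qed.

Lemma g_diff th : differentiable g th.
Proof.
have [T0|Tpos] := eqVneq T 0%N.
  have emp : forall t : 'I_T, False.
    by move=> t; have := ltn_ord t; rewrite {2}T0.
  rewrite (_ : g = cst 0); first exact: differentiable_cst.
  by apply/funext => x; rewrite /g /M /wm big1 // => t _; case: (emp t).
have Tp : (0 < T)%N by rewrite lt0n.
pose t0 : 'I_T := Ordinal Tp.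
have hD : forall th, Dn th != 0 by move=> x; rewrite gt_eqF // (Dn_gt0 X q x t0).
have hE : forall t x, differentiable (fun th => Ew th t) x.
  move=> t x; rewrite (_ : (fun th => Ew th t) = expR \o (fun th => zT th t)) //.
  apply: differentiable_comp.
    by apply: lin_diff => a u w; exact: zT_lin.
  exact/derivable1_diffP/derivable_expR.
have hDn : forall x, differentiable Dn x.
  move=> x; rewrite (_ : Dn = \sum_t (fun th => Ew th t)); last by rewrite fct_sumE.
  by apply: differentiable_sum => t; exact: hE.
rewrite (_ : g = (\sum_t (fun th => Ew th t * aT th t)) * (fun th => (Dn th)^-1)); last first.
  by rewrite fct_sumE; apply/funext => x; rewrite /g M_E.
apply: differentiableM.
  apply: differentiable_sum => t.
  rewrite (_ : (fun th => Ew th t * aT th t) = (fun th => Ew th t) * (fun th => aT th t)) //.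
  apply: differentiableM; first exact: hE.
  by apply: lin_diff => a u w; exact: aT_lin.
exact: differentiableV (hDn th) (hD th).
Qed.

Lemma M_lin x (a : R) y1 y2 : M x (fun t => a * y1 t + y2 t) = a * M x y1 + M x y2.
Proof.
rewrite /M /wm mulr_sumr -big_split; apply: eq_bigr => t _ /=; ring.
Qed.

Lemma Gv_lin x : linF (Gv x).
Proof.
move=> a u w; rewrite /Gv.
have e1 : aT (a *: u + w) = fun t => a * aT u t + aT w t by apply/funext => t; exact: aT_lin.
have e2 : (fun t => zT (a *: u + w) t * aT x t) =
          (fun t => a * (zT u t * aT x t) + zT w t * aT x t).
  by apply/funext => t; rewrite zT_lin; ring.
have e3 : zT (a *: u + w) = fun t => a * zT u t + zT w t by apply/funext => t; exact: zT_lin.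
rewrite e1 e2 e3 !M_lin; ring.
Qed.

Lemma grad_f (sigma : R -> R) x : (forall y, derivable sigma y 1) ->
  grad (fun th => sigma (g th)) x = \row_k (derive1 sigma (g x) * Gv x (delta_mx 0 k)).
Proof.
move=> hs; apply/rowP => k; rewrite !mxE.
by case: (is_derive_f X q x (delta_mx 0 k) hs).
Qed.

Lemma enormr_N (v : V) :
  enormr v = Num.sqrt (gam v ^+ 2 + del v ^+ 2).
Proof.
rewrite /gam /del -norm_split sqrtr_sqr ger0_norm //; exact: sqrtr_ge0.
Qed.

End Final.


Lemma enormc_tri (R : realType) n (u w : 'cV[R]_n) : enormc (u + w) <= enormc u + enormc w.
Proof.
have -> : enormc (u + w) = nrm (fun i => u i 0 + w i 0).
  by rewrite /enormc /nrm; congr Num.sqrt; apply: eq_bigr => i _; rewrite mxE.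
exact: nrm_triangle.
Qed.

Lemma enormc_scale (R : realType) n (a : R) (u : 'cV[R]_n) : enormc (a *: u) = `|a| * enormc u.
Proof.
have -> : enormc (a *: u) = nrm (fun i => a * u i 0).
  by rewrite /enormc /nrm; congr Num.sqrt; apply: eq_bigr => i _; rewrite mxE.
exact: nrm_scale.
Qed.

Unset Implicit Arguments.
Theorem lemma2 (R : realType) (d T m : nat)
  (sigma : R -> R) (s0 s1 s2 : R) (rho_u rho_w dl : R)
  (X : 'M[R]_(d, T)) (q : 'cV[R]_d)
  (U0 : nat -> 'cV[R]_d) (W0 : nat -> 'M[R]_d) (c0 : nat -> R) :
  (forall x, derivable sigma x 1) ->
  (forall x, derivable (derive1 sigma) x 1) ->
  (forall x, `|sigma x| <= s0) ->
  (forall x, `|derive1 sigma x| <= s1) ->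
  (forall x, `|derive1 (derive1 sigma) x| <= s2) ->
  ~~ odd m -> 0 < rho_u -> 0 < rho_w ->
  0 < dl < 1 ->
  (forall t : 'I_T, enormc (col t X) <= 1) ->
  enormc q <= 1 ->
  (* symmetric initialization (realization) *)
  (forall i, (i < m./2)%N ->
     [/\ U0 (i + m./2)%N = U0 i, W0 (i + m./2)%N = W0 i & c0 (i + m./2)%N = - c0 i]) ->
  (* the event E_{U,m}(dl) *)
  (forall i, (i < m)%N ->
     enormc (U0 i) <= Num.sqrt d%:R + Num.sqrt (2 * ln (m%:R / (2 * dl)))) ->
  forall i, (i < m)%N ->
  let S := [set th : 'rV[R]_(d + d * d) |
             enormc (thU th - U0 i) <= rho_u / Num.sqrt m%:R /\
             fnorm (thW th - W0 i) <= rho_w / Num.sqrt m%:R]%classic in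
  let f := hth sigma X q in
  (forall th, S th -> differentiable f th) /\
  (forall th th', S th -> S th' ->
     `|f th - f th'| <= L1m s1 d m dl rho_u * enormr (th - th')) /\
  (forall th th', S th -> S th' ->
     enormr (grad f th - grad f th') <= L2m s1 s2 d m dl rho_u * enormr (th - th')).
Proof.
move=> hd1 hd2 hs0 hs1 hs2 hm hru hrw hdl hX hq hsym hE i hi S f.
have hf : f = (fun th => sigma (g X q th)) by apply/funext => th; rewrite /f hth_g.
rewrite hf /L1m /L2m.
set Bb := B_Um d m dl rho_u.
have s10 : 0 <= s1 := le_trans (normr_ge0 _) (hs1 0).
have s20 : 0 <= s2 := le_trans (normr_ge0 _) (hs2 0).
have m0 : (0 < m)%N := leq_ltn_trans (leq0n i) hi.
have Bb0 : 0 < Bb.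
  rewrite /Bb /B_Um.
  have : 0 < rho_u / Num.sqrt m%:R by rewrite divr_gt0 // sqrtr_gt0 ltr0n.
  have := sqrtr_ge0 (d%:R : R); have := sqrtr_ge0 (2 * ln (m%:R / (2 * dl)) : R).
  lra.
have hU : forall th, S th -> enormc (thU th) <= Bb.
  move=> th [h1 _]; have h2 := hE i hi.
  have h3 : enormc (thU th) <= enormc (U0 i) + enormc (thU th - U0 i).
    by rewrite -{1}(subrKC (U0 i) (thU th)); exact: enormc_tri.
  move: h1 h2 h3; rewrite /Bb /B_Um; lra.
have hseg : forall th th', S th -> S th' -> forall s, 0 <= s <= 1 ->
    enormc (thU (th' + s *: (th - th'))) <= Bb.
  move=> th th' h h' s /andP[sa sb].
  have -> : thU (th' + s *: (th - th')) = (1 - s) *: thU th' + s *: thU th.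
    by apply/matrixP => a b; rewrite !mxE; ring.
  apply: le_trans (enormc_tri _ _) _.
  rewrite !enormc_scale !ger0_norm ?subr_ge0 //.
  have := hU _ h; have := hU _ h'; nra.
have haT : forall x, enormc (thU x) <= Bb -> forall t, `|aT X x t| <= Bb.
  by move=> x hx t; apply: le_trans _ hx; exact: aT_bound.
have hS1 : 0 <= Num.sqrt (1 + Bb ^+ 2) := sqrtr_ge0 _.
split.
  move=> th _.
  rewrite (_ : (fun th => sigma (g X q th)) = sigma \o g X q) //.
  apply: differentiable_comp; [exact: g_diff | exact/derivable1_diffP/hd1].
split.
  move=> th th' Sth Sth'.
  set D := th - th'.
  pose phi := fun s : R => sigma (g X q (th' + s *: D)).
  pose dphi := fun s : R => derive1 sigma (g X q (th' + s *: D)) * Gv X q (th' + s *: D) D.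
  have hder : forall s : R, is_derive s 1 phi (dphi s).
    move=> s; rewrite /phi /dphi; apply: (is_derive_line (F := fun y => sigma (g X q y)) (x := th') (v := D)); exact: is_derive_f.
  have hcont : {within `[0, 1], continuous phi}.
    by apply: derivable_within_continuous => s _; case: (hder s).
  have [c c01 hc] := MVT_segment ler01 (fun s _ => hder s) hcont.
  have e1 : phi 1 = sigma (g X q th) by rewrite /phi scale1r /D addrC subrK.
  have e0 : phi 0 = sigma (g X q th') by rewrite /phi scale0r addr0.
  rewrite -e1 -e0 hc subr0 mulr1 /dphi normrM.
  have c01' : 0 <= c <= 1 by rewrite !(itvP c01).
  have hxc := hseg _ _ Sth Sth' c c01'.
  have hG := Gv_bound hX hq Bb0 D (haT _ hxc).
  have hR := RL1 (gam_ge0 D) (del_ge0 D) (ltW Bb0).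
  rewrite -(enormr_N D) in hR.
  rewrite -mulrA; apply: ler_pM; [exact: normr_ge0 | exact: normr_ge0 | exact: hs1 | exact: le_trans hG hR].
move=> th th' Sth Sth'.
rewrite !grad_f //.
set w := _ - _.
set D := th - th'.
pose Psi := fun x => derive1 sigma (g X q x) * Gv X q x w.
have wk : forall k, w 0 k = derive1 sigma (g X q th) * Gv X q th (delta_mx 0 k)
                          - derive1 sigma (g X q th') * Gv X q th' (delta_mx 0 k).
  by move=> k; rewrite /w !mxE.
have L : forall x, \sum_k w 0 k * Gv X q x (delta_mx 0 k) = Gv X q x w.
  by move=> x; rewrite -(lin_sum (Gv_lin X q x) w).
have key : enormr w ^+ 2 = Psi th - Psi th'.
  rewrite /enormr sqr_sqrtr; last exact: sumsq_ge0.
  rewrite /Psi -!L !mulr_sumr -sumrB; apply: eq_bigr => k _.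
  by rewrite expr2 {1}wk; ring.
pose dpsi := fun s : R =>
  let x := th' + s *: D in
  derive1 sigma (g X q x) *: Hs X q x D w
  + Gv X q x w *: (derive1 (derive1 sigma) (g X q x) * Gv X q x D).
have hder : forall s : R, is_derive s 1 (fun s => Psi (th' + s *: D)) (dpsi s).
  move=> s; apply: is_derive_line.
  have h1 := is_derive_comp1 (is_derive_g X q (th' + s *: D) D) (hd2 (g X q (th' + s *: D))).
  have h2 := is_derive_Gv X q (th' + s *: D) D w.
  have := is_deriveM h1 h2.
  by rewrite (_ : ((fun y => derive1 sigma (g X q y)) * (fun th => Gv X q th w)) = Psi).
have hcont : {within `[0, 1], continuous (fun s => Psi (th' + s *: D))}.
  by apply: derivable_within_continuous => s _; case: (hder s).
have [c c01 hc] := MVT_segment ler01 (fun s _ => hder s) hcont.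
have e1 : th' + 1 *: D = th by rewrite scale1r /D addrC subrK.
have e0 : th' + 0 *: D = th' by rewrite scale0r addr0.
rewrite e1 e0 subr0 mulr1 in hc.
have c01' : 0 <= c <= 1 by rewrite !(itvP c01).
have hxc := hseg _ _ Sth Sth' c c01'.
set x := th' + c *: D in hxc.
have ha := haT _ hxc.
have hGD := Gv_bound hX hq Bb0 D ha.
have hGw := Gv_bound hX hq Bb0 w ha.
have hH := Hs_bound hX hq Bb0 D w ha.
have R1D := RL1 (gam_ge0 D) (del_ge0 D) (ltW Bb0).
have R1w := RL1 (gam_ge0 w) (del_ge0 w) (ltW Bb0).
have R2 := RL2 (gam_ge0 D) (del_ge0 D) (gam_ge0 w) (del_ge0 w) (ltW Bb0).
rewrite -(enormr_N D) in R1D R2; rewrite -(enormr_N w) in R1w R2.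
have nD := sqrtr_ge0 (\sum_i D 0 i ^+ 2).
have nw := sqrtr_ge0 (\sum_i w 0 i ^+ 2).
have SS : Num.sqrt (1 + Bb ^+ 2) ^+ 2 = 1 + Bb ^+ 2 by rewrite sqr_sqrtr // addr_ge0 // sqr_ge0.
have bound : `|dpsi c| <= (s2 * (1 + Bb ^+ 2) + 8 * s1 * Num.sqrt (1 + Bb ^+ 2)) * enormr D * enormr w.
  rewrite /dpsi /= -/x /GRing.scale /=.
  apply: le_trans (ler_normD _ _) _.
  have t1 : `|derive1 sigma (g X q x) * Hs X q x D w| <=
            s1 * (8 * Num.sqrt (1 + Bb ^+ 2) * (enormr D * enormr w)).
    rewrite normrM; apply: ler_pM; [exact: normr_ge0 | exact: normr_ge0 | exact: hs1 |].
    exact: le_trans hH R2.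
  have t2 : `|Gv X q x w * (derive1 (derive1 sigma) (g X q x) * Gv X q x D)| <=
            (Num.sqrt (1 + Bb ^+ 2) * enormr w) * (s2 * (Num.sqrt (1 + Bb ^+ 2) * enormr D)).
    rewrite !normrM; apply: ler_pM; [exact: normr_ge0 | by rewrite mulr_ge0 | exact: le_trans hGw R1w |].
    apply: ler_pM; [exact: normr_ge0 | exact: normr_ge0 | exact: hs2 | exact: le_trans hGD R1D].
  apply: le_trans (lerD t1 t2) _.
  rewrite le_eqVlt; apply/orP; left; apply/eqP.
  set S0 := Num.sqrt (1 + Bb ^+ 2) in SS *; rewrite -SS; ring.
have hw0 := sqrtr_ge0 (\sum_i w 0 i ^+ 2).
have : enormr w ^+ 2 <= (s2 * (1 + Bb ^+ 2) + 8 * s1 * Num.sqrt (1 + Bb ^+ 2)) * enormr D * enormr w.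
  by rewrite key hc; apply: le_trans (ler_norm _) bound.
have hL0 : 0 <= (s2 * (1 + Bb ^+ 2) + 8 * s1 * Num.sqrt (1 + Bb ^+ 2)) * enormr D.
  by rewrite mulr_ge0 // ?addr_ge0 ?mulr_ge0 // ?addr_ge0 ?sqr_ge0 //; exact: sqrtr_ge0.
move: hL0; rewrite /enormr.
set a := Num.sqrt (\sum_i w 0 i ^+ 2); set K := _ * _.
move=> hK hsq.
have [a0|apos] := eqVneq a 0; first by rewrite a0.
have : 0 < a by rewrite lt_def apos hw0.
nra.
Qed.
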